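(* Consider one step of a delegated variational quantum algorithm (DVQA) in which a gradient approximation $g(\theta)=(g_1(\theta),\dots,g_{N_P}(\theta))$ of $\nabla f$ is computed via the Parameter Shift Rule, where $f(\theta)=\mathrm{Tr}[O\,U(\theta)\rho_{in}U^\dagger(\theta)]$ and $O=\sum_{i=1}^{N_o} c_iP_i$ is a global observable written as a real linear combination of local Pauli operators $P_i$. Each cost-function evaluation uses $N_s$ measurement shots (computation rounds). Let $\hat g(\theta)$ be the gradient obtained when $\delta$ of the computation rounds of the step are corrupted, let $e=\frac{\|g(\theta)-\hat g(\theta)\|}{\|g(\theta)\|}$ be the relative error of the gradient, and let $\epsilon_0>0$ be a lower bound on $\|g(\theta)\|$. Then $$e\le \frac{\sum_i |c_i|}{\epsilon_0 N_s}\,\delta .$$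
   Context: Parameter Shift Rule: for each parameter $\theta_j$ (with $N_P$ parameters in total), $g_j(\theta)=\frac12\big(f_{+}-f_{-}\big)$ where $f_{\pm}$ is $f$ evaluated with $\theta_j$ shifted by $\pm\pi/2$; hence one step requires $2N_P$ function evaluations and $2N_PN_s$ shots (computation rounds) in total. Each cost-function evaluation is estimated from the sample average of measured Pauli eigenvalues (each in $\{\pm1\}$) weighted by the coefficients $c_i$. A computation round is corrupted if the eigenvalue it returns is replaced by an arbitrary (adversarial) eigenvalue. The norm $\|\cdot\|$ denotes the $\ell_1$ norm $\|v\|=\sum_j |v_j|$. $\delta$ is the total number of corrupted computation rounds over all $2N_P$ function evaluations of the step. *)

(* Defs.v *)
From HB Require Import structures.
From mathcomp Require Import all_boot all_order all_algebra.
Set Implicit Arguments. Unset Strict Implicit. Unset Printing Implicit Defensive.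
Import Order.TTheory GRing.Theory Num.Theory.
Local Open Scope ring_scope.

(* A computation round is indexed by (j, s, k) : 'I_NP * bool * 'I_Ns :
   parameter j, shift sign s (true = +pi/2, false = -pi/2), shot k.
   Each round returns the measured Pauli eigenvalues  m (j,s,k) i  for i : 'I_NO. *)
Definition round (NP Ns : nat) := ('I_NP * bool * 'I_Ns)%type.

Definition outcomes (R : Type) (NP Ns NO : nat) := round NP Ns -> 'I_NO -> R.

Definition pm1_valued (R : numDomainType) NP Ns NO (m : outcomes R NP Ns NO) : Prop :=
  forall r i, m r i = 1 \/ m r i = -1.

(* estimate of f(theta with theta_j shifted by s*pi/2):
   sum_i c_i * (sample average over N_s shots of the eigenvalue of P_i) *)
Definition f_est (R : numFieldType) NP Ns NO (c : 'I_NO -> R)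
    (m : outcomes R NP Ns NO) (j : 'I_NP) (s : bool) : R :=
  \sum_(i < NO) c i * ((Ns%:R)^-1 * \sum_(k < Ns) m (j, s, k) i).

Definition psr_grad (R : numFieldType) NP Ns NO (c : 'I_NO -> R)
    (m : outcomes R NP Ns NO) (j : 'I_NP) : R :=
  (f_est c m j true - f_est c m j false) / 2.

Definition l1norm (R : numDomainType) n (v : 'I_n -> R) : R := \sum_(j < n) `|v j|.

(* Main.v *)
Require Import Defs.
From mathcomp Require Import all_boot all_order all_algebra.
From mathcomp Require Import ring lra.
Import Order.TTheory GRing.Theory Num.Theory.
Local Open Scope ring_scope.

Lemma fdiff (R : realFieldType) (NP Ns NO : nat) (c : 'I_NO -> R)
    (m mh : round NP Ns -> 'I_NO -> R) (C : {set round NP Ns}) j s :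
  (0 < Ns)%N ->
  pm1_valued m -> pm1_valued mh ->
  (forall r, r \notin C -> mh r = m r) ->
  `|f_est c m j s - f_est c mh j s| <=
   (\sum_(i < NO) `|c i|) * (Ns%:R)^-1 * (2 * \sum_(k < Ns) ((j, s, k) \in C)%:R).
Proof.
move=> Ns0 hm hmh hC.
rewrite /f_est -sumrB -!mulrA mulr_suml.
apply: le_trans (ler_norm_sum _ _ _) _.
apply: ler_sum => i _.
rewrite -mulrBr -mulrBr -sumrB normrM normrM.
apply: ler_wpM2l; first exact: normr_ge0.
rewrite ger0_norm ?invr_ge0 ?ler0n //.
apply: ler_wpM2l; first by rewrite invr_ge0 ler0n.
apply: le_trans (ler_norm_sum _ _ _) _.
rewrite mulr_sumr; apply: ler_sum => k _.
case: (boolP ((j, s, k) \in C)) => hk.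
  rewrite mulr1.
  have [->|->] := hm (j, s, k) i; have [->|->] := hmh (j, s, k) i;
    rewrite ?subrr ?normr0 ?ler0n //.
  - have -> : (1 - -1 : R) = 2%:R by rewrite opprK.
    by rewrite normr_nat.
  - have -> : (-1 - 1 : R) = - 2%:R by rewrite -opprD.
    by rewrite normrN normr_nat.
rewrite hC // subrr normr0 mulr0 //.
Qed.

Theorem lemma1 (R : realFieldType) (NP Ns NO : nat) (c : 'I_NO -> R)
    (m mh : round NP Ns -> 'I_NO -> R) (C : {set round NP Ns}) (eps0 : R) :
  (0 < Ns)%N ->
  pm1_valued m -> pm1_valued mh ->
  (forall r, r \notin C -> mh r = m r) ->
  0 < eps0 ->
  eps0 <= l1norm (psr_grad c m) ->
  l1norm (fun j => psr_grad c m j - psr_grad c mh j) / l1norm (psr_grad c m)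
    <= (\sum_(i < NO) `|c i|) / (eps0 * Ns%:R) * (#|C|)%:R.
Proof.
move=> Ns0 hm hmh hC e0 heG.
set S := \sum_(i < NO) `|c i|.
set K := fun j s => \sum_(k < Ns) ((j, s, k) \in C)%:R : R.
have hj : forall j, `|psr_grad c m j - psr_grad c mh j| <=
    S * (Ns%:R)^-1 * (K j true + K j false).
  move=> j; rewrite /psr_grad -mulrBl.
  have -> : (f_est c m j true - f_est c m j false -
       (f_est c mh j true - f_est c mh j false)) =
     (f_est c m j true - f_est c mh j true) -
       (f_est c m j false - f_est c mh j false) by rewrite opprB; ring.
  rewrite normrM [`|2^-1|]ger0_norm ?invr_ge0 ?ler0n //.
  rewrite ler_pdivrMr ?ltr0n //.
  apply: le_trans (ler_normB _ _) _.
  have := fdiff _ _ _ _ c m mh C j true Ns0 hm hmh hC.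
  have := fdiff _ _ _ _ c m mh C j false Ns0 hm hmh hC.
  rewrite -/S -/(K j true) -/(K j false) => h1 h2.
  have -> : S * Ns%:R^-1 * (K j true + K j false) * 2 =
    S * Ns%:R^-1 * (2 * K j true) + S * Ns%:R^-1 * (2 * K j false) by ring.
  exact: lerD.
have hD : l1norm (fun j => psr_grad c m j - psr_grad c mh j) <=
    S * (Ns%:R)^-1 * (#|C|)%:R.
  have -> : (#|C|)%:R = \sum_(j < NP) (K j true + K j false) :> R.
    rewrite -sum1_card natr_sum.
    rewrite [RHS](eq_bigr (fun j => \sum_(s : bool) K j s)); last first.
      by move=> j _; rewrite big_bool /= addrC.
    set F := fun r : round NP Ns => ((r \in C)%:R : R).
    have E1 : \sum_(r : round NP Ns) F r = \sum_(ab : 'I_NP * bool) \sum_(k < Ns) F (ab, k).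
      rewrite pair_big; apply: eq_bigr => [[ab k]] _ //.
    have E2 : forall G : 'I_NP * bool -> R, \sum_(ab : 'I_NP * bool) G ab = \sum_(a < NP) \sum_(b : bool) G (a, b).
      by move=> G; rewrite pair_big; apply: eq_bigr => [[a b]] _.
    have -> : \sum_(r in C) (1 : R) = \sum_(r : round NP Ns) F r.
      by rewrite big_mkcond /=; apply: eq_bigr => r _; rewrite /F; case: (r \in C).
    rewrite E1 E2; apply: eq_bigr => j _; by rewrite big_bool /= addrC.
  rewrite mulr_sumr /l1norm; apply: ler_sum => j _; exact: hj.
have G0 : 0 < l1norm (psr_grad c m) by apply: lt_le_trans heG.
have D0 : 0 <= l1norm (fun j => psr_grad c m j - psr_grad c mh j).
  by apply: sumr_ge0 => j _; exact: normr_ge0.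
rewrite ler_pdivrMr //.
apply: le_trans hD _.
set G := l1norm (psr_grad c m).
have -> : S / (eps0 * Ns%:R) * (#|C|)%:R * G =
  (S * (Ns%:R)^-1 * (#|C|)%:R) * (G / eps0).
  rewrite invfM; ring.
apply: ler_peMr.
  by apply: mulr_ge0; [apply: mulr_ge0; [apply: sumr_ge0 => i _; exact: normr_ge0|rewrite invr_ge0 ler0n]|exact: ler0n].
by rewrite ler_pdivlMr // mul1r.
Qed.
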